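(* Assume $K_1\subseteq K_2\subseteq\cdots\subseteq K_n\subseteq\mathbb F_q$ are subfields. Let $\psi\in\mathrm{Aff}(\mathbb F_q^n)$ be given by $\boldsymbol\alpha\mapsto A\boldsymbol\alpha+\boldsymbol\beta$ with $A=(a_{ij})\in GL(n,\mathbb F_q)$ and $\boldsymbol\beta=(b_1,\dots,b_n)^T\in\mathbb F_q^n$. Then $\psi(\mathcal X)=\mathcal X$ (i.e.\ $\psi|_{\mathcal X}\in\mathrm{Aff}(\mathcal X)$) if and only if: (i) for all $i,j\in\{1,\dots,n\}$, $a_{ij}\in K_i$, $b_j\in K_j$, and $a_{ij}=0$ whenever $K_i\subsetneq K_j$; and (ii) for every maximal interval of indices $i\le j$ with $K_i=K_{i+1}=\cdots=K_j$ (i.e.\ $K_{i-1}\subsetneq K_i$ or $i=1$, and $K_j\subsetneq K_{j+1}$ or $j=n$), the square submatrix $(a_{uw})_{i\le u,w\le j}$ is invertible.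
   Context: $\mathcal X=K_1\times\cdots\times K_n\subseteq\mathbb F_q^n$. $\mathrm{Aff}(\mathbb F_q^n)$ is the group of maps $\boldsymbol\alpha\mapsto A\boldsymbol\alpha+\boldsymbol\beta$ with $A\in GL(n,\mathbb F_q)$, $\boldsymbol\beta\in\mathbb F_q^n$. $\mathrm{Aff}(\mathcal X)$ is the set of maps $\varphi:\mathcal X\to\mathcal X$ of the form $\varphi=\psi|_{\mathcal X}$ with $\psi\in\mathrm{Aff}(\mathbb F_q^n)$ and $\psi(\mathcal X)=\mathcal X$. *)

(* Defs.v *)
From HB Require Import structures.
From mathcomp Require Import all_boot all_order all_algebra.
Set Implicit Arguments. Unset Strict Implicit. Unset Printing Implicit Defensive.
Import GRing.Theory.
Local Open Scope ring_scope.

Definition is_subfield (F : finFieldType) (K : {set F}) : Prop :=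
  [/\ 0 \in K, 1 \in K,
      (forall x y, x \in K -> y \in K -> x - y \in K),
      (forall x y, x \in K -> y \in K -> x * y \in K) &
      (forall x, x \in K -> x^-1 \in K)].

Definition prodX (F : finFieldType) (n : nat) (K : 'I_n -> {set F})
  : {set 'cV[F]_n} :=
  [set x : 'cV[F]_n | [forall i : 'I_n, x i ord0 \in K i]].

Definition affimg (F : finFieldType) (n : nat) (A : 'M[F]_n) (b : 'cV[F]_n)
  (S : {set 'cV[F]_n}) : {set 'cV[F]_n} :=
  [set A *m x + b | x in S].

(* The index i + u as an element of 'I_n (default i if out of range). *)
Definition shift (n : nat) (i : 'I_n) (u : nat) : 'I_n := insubd i (i + u)%N.

Definition subblock (F : finFieldType) (n : nat) (A : 'M[F]_n) (i j : 'I_n)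
  : 'M[F]_((j - i).+1) :=
  \matrix_(u < (j - i).+1, w < (j - i).+1) A (shift i u) (shift i w).

(* Main.v *)
Require Import Defs.
From HB Require Import structures.
From mathcomp Require Import all_boot all_order all_algebra.
From mathcomp Require Import zify.
Import GRing.Theory.
Local Open Scope ring_scope.

Lemma sf_add (F : finFieldType) (K : {set F}) x y :
  is_subfield K -> x \in K -> y \in K -> x + y \in K.
Proof.
case=> H0 H1 Hs Hm Hi hx hy.
by have := Hs x (0 - y) hx (Hs 0 y H0 hy); rewrite sub0r opprK.
Qed.

Lemma sf_sum (F : finFieldType) (K : {set F}) (I : finType) (P : pred I) f :
  is_subfield K -> (forall i, P i -> f i \in K) -> \sum_(i | P i) f i \in K.
Proof.
move=> HK Hf; apply: (big_ind (fun x => x \in K)) => //; first by case: HK.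
by move=> x y; apply: sf_add.
Qed.

Lemma unit_row_inj (F : fieldType) (m : nat) (M : 'M[F]_m) :
  (forall v : 'rV_m, v *m M = 0 -> v = 0) -> M \in unitmx.
Proof.
move=> H; rewrite -row_free_unit -kermx_eq0; apply/eqP; apply/row_matrixP => k.
by rewrite row0; apply: H; rewrite -row_mul mulmx_ker row0.
Qed.

Lemma shiftE (n : nat) (i : 'I_n) (u : nat) : (i + u < n)%N ->
  val (shift i u) = (i + u)%N.
Proof. by move=> h; rewrite /shift val_insubd h. Qed.

Lemma sum_block (F : finFieldType) (n : nat) (i j : 'I_n) (g : 'I_n -> F) :
  (i <= j)%N ->
  \sum_(k : 'I_n | (i <= k <= j)%N) g k = \sum_(k' < (j - i).+1) g (shift i k').
Proof.
move=> hij.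
rewrite (reindex_onto (fun k' : 'I_(j - i).+1 => shift i k')
                      (fun k : 'I_n => inord (k - i))) /=.
  apply: eq_bigl => k'; have hk := ltn_ord k'.
  have hs : (i + k' < n)%N by have := ltn_ord j; lia.
  rewrite shiftE //; apply/andP; split; first by lia.
  by apply/eqP/val_inj; rewrite /= inordK; lia.
move=> k /andP[hk1 hk2]; have := ltn_ord j; have := ltn_ord k; move=> ? ?.
apply/val_inj; rewrite shiftE ?inordK /=; try lia.
Qed.

Lemma block_unit (F : finFieldType) (n : nat) (K : 'I_n -> {set F})
  (Hchain : forall i j : 'I_n, (i <= j)%N -> K i \subset K j)
  (A : 'M[F]_n) (HA : A \in unitmx)
  (HZ : forall u w : 'I_n, K u \proper K w -> A u w = 0)
  (i j : 'I_n) (hij : (i <= j)%N)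
  (Hprev : forall k : 'I_n, k.+1 = i -> K k \proper K i)
  (Hnext : forall k : 'I_n, k = j.+1 :> nat -> K j \proper K k) :
  subblock A i j \in unitmx.
Proof.
have Z1 : forall u w : 'I_n, (u < i)%N -> (i <= w)%N -> A u w = 0.
  move=> u w hu hw; apply: HZ.
  have hk : (i.-1 < n)%N by have := ltn_ord i; lia.
  have hP := Hprev (Ordinal hk) (ltac:(simpl; lia)).
  apply: (proper_sub_trans _ (Hchain _ _ hw)).
  apply: (sub_proper_trans _ hP); apply: Hchain => /=; lia.
have Z2 : forall u w : 'I_n, (u <= j)%N -> (j < w)%N -> A u w = 0.
  move=> u w hu hw; apply: HZ.
  have hk : (j.+1 < n)%N by have := ltn_ord w; lia.
  have hP := Hnext (Ordinal hk) erefl.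
  apply: (sub_proper_trans (Hchain _ _ hu)).
  apply: (proper_sub_trans hP); apply: Hchain => /=; lia.
apply: unit_row_inj => v Hv.
pose x : 'rV[F]_n := \row_(u < n) (if (i <= u <= j)%N then v 0 (inord (u - i)) else 0).
pose S := [set y : 'rV[F]_n | [forall u : 'I_n, (i <= u)%N ==> (y 0 u == 0)]].
have C1 : x *m A \in S.
  rewrite inE; apply/forallP => w; apply/implyP => hw; rewrite !mxE.
  rewrite (bigID (fun k : 'I_n => (i <= k <= j)%N)) /=.
  rewrite [X in _ + X]big1 ?addr0; last by move=> k /negbTE hk; rewrite mxE hk mul0r.
  case: (leqP w j) => hwj; last first.
    by apply/eqP; apply: big1 => k /andP[_ hk]; rewrite Z2 ?mulr0.
  rewrite (@sum_block _ _ i j (fun k : 'I_n => x 0 k * A k w) hij).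
  have hw' : (w - i < (j - i).+1)%N by lia.
  have := congr1 (fun M : 'rV[F]_(j - i).+1 => M 0 (inord (w - i) : 'I_(j - i).+1)) Hv.
  rewrite !mxE => H0; apply/eqP; rewrite -[X in _ = X]H0; apply: eq_bigr => k' _.
  have hk := ltn_ord k'.
  have hs : (i + k' < n)%N by have := ltn_ord j; lia.
  rewrite !mxE shiftE // ifT; last by lia.
  have -> : (inord (i + k' - i) : 'I_(j - i).+1) = k'.
    by apply/val_inj; rewrite /= inordK; lia.
  congr (_ * A _ _); apply/val_inj; have := ltn_ord w; have := ltn_ord j.
  move: hw hwj => /= hw hwj ? ?; rewrite shiftE ?inordK /=; lia.
have inj : injective (fun y : 'rV[F]_n => y *m A).
  by move=> y1 y2 /= e; rewrite -(mulmxK HA y1) e mulmxK.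
have sub : [set y *m A | y in S] \subset S.
  apply/subsetP => _ /imsetP[y hy ->]; rewrite inE; apply/forallP => w.
  apply/implyP => hw; rewrite mxE; apply/eqP; apply: big1 => k _.
  case: (leqP i k) => hk.
    by move: hy; rewrite inE => /forallP/(_ k); rewrite hk => /eqP ->; rewrite mul0r.
  by rewrite Z1 ?mulr0.
have eqS : [set y *m A | y in S] = S.
  apply/eqP; rewrite eqEcard sub /= card_imset //.
move: C1; rewrite -{1}eqS => /imsetP[y hy /inj exy].
move: hy; rewrite -exy inE => /forallP hx.
apply/rowP => k'; rewrite mxE.
have hk := ltn_ord k'.
have hs : (i + k' < n)%N by have := ltn_ord j; lia.
have := hx (shift i k'); rewrite shiftE // leq_addr /=.
rewrite !mxE shiftE // ifT; last by lia.
have -> : (inord (i + k' - i) : 'I_(j - i).+1) = k'.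
  by apply/val_inj; rewrite /= inordK; lia.
by move/eqP.
Qed.

Theorem mainTheorem7 (F : finFieldType) (n : nat) (K : 'I_n -> {set F})
  (HK : forall i, is_subfield (K i))
  (Hchain : forall i j : 'I_n, (i <= j)%N -> K i \subset K j)
  (A : 'M[F]_n) (b : 'cV[F]_n) (HA : A \in unitmx) :
  affimg A b (prodX K) = prodX K <->
  ((forall i j : 'I_n,
      [/\ A i j \in K i, b j ord0 \in K j & (K i \proper K j -> A i j = 0)])
   /\
   (forall i j : 'I_n, (i <= j)%N ->
      (forall k : 'I_n, (i <= k <= j)%N -> K k = K i) ->
      (forall k : 'I_n, k.+1 = i -> K k \proper K i) ->
      (forall k : 'I_n, k = j.+1 :> nat -> K j \proper K k) ->
      subblock A i j \in unitmx)).
Proof.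
split.
- move=> H.
  have Himg : forall x, x \in prodX K -> A *m x + b \in prodX K.
    by move=> x hx; rewrite -H; apply/imsetP; exists x.
  have Hb : forall u, b u ord0 \in K u.
    move=> u; have := Himg 0; rewrite mulmx0 add0r.
    have h0 : (0 : 'cV[F]_n) \in prodX K.
      by rewrite inE; apply/forallP => k; rewrite mxE; case: (HK k).
    by move/(_ h0); rewrite inE => /forallP/(_ u).
  pose e (j : 'I_n) (y : F) : 'cV[F]_n := \col_(u < n) (if u == j then y else 0).
  have He : forall u j y, y \in K j -> A u j * y \in K u.
    move=> u j y hy.
    have he : e j y \in prodX K.
      rewrite inE; apply/forallP => k; rewrite mxE.
      by case: eqP => [->|_] //; case: (HK k).
    move: (Himg _ he); rewrite inE => /forallP/(_ u); rewrite !mxE.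
    rewrite (bigD1 j) //= big1 ?addr0; last first.
      by move=> k /negbTE hk; rewrite mxE hk mulr0.
    rewrite mxE eqxx => hs.
    have := (let: And5 _ _ Hs _ _ := HK u in Hs) _ _ hs (Hb u).
    by rewrite addrK.
  have Ha : forall u j, A u j \in K u.
    by move=> u j; have := He u j 1; rewrite mulr1; apply; case: (HK j).
  have HZ : forall u w, K u \proper K w -> A u w = 0.
    move=> u w hp; apply/eqP; apply/negPn/negP => hnz.
    move: hp; rewrite properE => /andP[_ /negP]; apply.
    apply/subsetP => y hy.
    have := (let: And5 _ _ _ Hm _ := HK u in Hm) _ _
              ((let: And5 _ _ _ _ Hi := HK u in Hi) _ (Ha u w)) (He u w y hy).
    by rewrite mulKf.
  split; first by move=> u w; split; [apply: Ha|apply: Hb|apply: HZ].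
  move=> i j hij _ Hp Hn; exact: (@block_unit _ _ _ Hchain _ HA HZ _ _ hij Hp Hn).
- move=> [Hi Hii].
  have sub : affimg A b (prodX K) \subset prodX K.
    apply/subsetP => _ /imsetP[x hx ->].
    move: hx; rewrite !inE => /forallP hx; apply/forallP => u; rewrite !mxE.
    apply: sf_add => //; last by case: (Hi u u).
    apply: sf_sum => // w _.
    case: (boolP (K u \proper K w)) => hp.
      by case: (Hi u w) => _ _ ->; rewrite // mul0r; case: (HK u).
    have hwu : K w \subset K u.
      case: (leqP w u) => h; first exact: Hchain.
      by move: hp; rewrite properE Hchain ?(ltnW h) //= negbK.
    case: (Hi u w) => hA _ _.
    by case: (HK u) => _ _ _ Hm _; apply: Hm => //; apply: (subsetP hwu).
  apply/eqP; rewrite eqEcard sub /= /affimg card_imset //.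
  by move=> y1 y2 /= /addIr e; rewrite -(mulKmx HA y1) e mulKmx.
Qed.
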